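(* Let $q=2$ and let $n,d$ be integers with $d\ge1$ and $n\ge 2d+1$. For all $0\le i\le d-1$ and $1\le j\le d$, $$|G_j(i+1)|<|G_j(i)|.$$
   Context: With $q=2$, for integers $m\ge 0$ and $l$, ${m\brack l}=\prod_{t=1}^{l}\frac{q^{m-t+1}-1}{q^t-1}$ for $l\ge0$ and $0$ for $l<0$. For $0\le i,j\le d$, $$G_j(i)=\sum_{h=\max\{0,i-j\}}^{\min\{i,d-j\}}(-1)^{i-h}q^{j(j-i+h)+\binom{i-h}{2}}{i\brack h}{d-h\brack j}{n-d-i+h\brack n-d-j};$$ these are the eigenvalues of the Grassmann graph $G_q(n,d,j)$ (vertices: $d$-subspaces of $\mathbb F_q^n$, adjacent iff intersection has dimension $d-j$). *)

(* Defs.v *)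
From mathcomp Require Import all_boot all_order all_algebra.
Set Implicit Arguments. Unset Strict Implicit. Unset Printing Implicit Defensive.
Import Order.TTheory GRing.Theory Num.Theory.
Local Open Scope ring_scope.

Definition q : nat := 2.

(* Gaussian binomial [m brack l] for l >= 0 (as a rational number; it is an
   integer). The case l < 0 never arises below since indices are nats. *)
Definition gbin (m l : nat) : rat :=
  \prod_(1 <= t < l.+1) (((q ^ (m - t + 1))%:R - 1) / ((q ^ t)%:R - 1)).

(* G_j(i) for the Grassmann graph G_q(n,d,j), q = 2.
   Summation over h from max(0,i-j) to min(i,d-j) (inclusive).
   All nat subtractions below are non-negative on this range when n >= 2d+1:
   j - i + h >= 0, i - h >= 0, d - h >= 0, n - d - i + h >= 0, n - d - j >= 0. *)
Definition G (n d j i : nat) : rat :=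
  \sum_(maxn 0 (i - j) <= h < (minn i (d - j)).+1)
    (-1) ^+ (i - h) * (q ^ (j * (j + h - i) + 'C(i - h, 2)))%:R
      * gbin i h * gbin (d - h) j * gbin (n - d - i + h) (n - d - j).

(* Main.v *)
Require Import Defs.
From mathcomp Require Import all_boot all_order all_algebra ring lra zify.
Import Order.TTheory GRing.Theory Num.Theory.
Local Open Scope ring_scope.

Local Notation e k := ((q ^ k)%:R : rat).



Lemma eD a b : e (a + b)%N = e a * e b.
Proof. by rewrite expnD natrM. Qed.
Lemma e0 : e 0 = 1. Proof. by []. Qed.
Lemma e1 : e 1 = 2. Proof. by []. Qed.
Lemma eS a : e a.+1 = 2 * e a.
Proof. by rewrite -addn1 eD mulrC. Qed.
Lemma e_ge1 a : 1 <= e a.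
Proof. by rewrite ler1n expn_gt0. Qed.
Lemma e_gt0 a : 0 < e a.
Proof. by rewrite ltr0n expn_gt0. Qed.
Lemma e_le a b : (a <= b)%N -> e a <= e b.
Proof. by move=> h; rewrite ler_nat leq_pexp2l. Qed.
Lemma e_ge2 a : (0 < a)%N -> 2 <= e a.
Proof. by move=> h; rewrite -e1; apply: e_le. Qed.
Lemma em1_gt0 a : (0 < a)%N -> 0 < e a - 1.
Proof. move=> h; have := @e_ge2 a h; rewrite subr_gt0; apply: lt_le_trans; by []. Qed.
Lemma em1_ge0 a : 0 <= e a - 1.
Proof. by rewrite subr_ge0 e_ge1. Qed.

Lemma gbin0 m : gbin m 0 = 1.
Proof. by rewrite /gbin big_geq. Qed.

Lemma gbin_gt0 m l : 0 < gbin m l.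
Proof.
rewrite /gbin big_nat_cond; apply: prodr_gt0 => t /andP[/andP[t1 _] _].
apply: divr_gt0; apply: em1_gt0; lia.
Qed.

Lemma gbinL m l : (l < m)%N -> gbin m l.+1 * (e l.+1 - 1) = gbin m l * (e (m - l) - 1).
Proof.
move=> lm; rewrite /gbin big_nat_recr //= -/(gbin m l).
have -> : (m - l.+1 + 1 = m - l)%N by lia.
rewrite -mulrA mulfVK //; apply: lt0r_neq0; exact: em1_gt0.
Qed.

Lemma gbinM m l : (l <= m)%N -> gbin m.+1 l * (e (m.+1 - l) - 1) = gbin m l * (e m.+1 - 1).
Proof.
elim: l => [|l IH] lm; first by rewrite !gbin0 subn0.
have lm' : (l <= m)%N by lia.
have nz : e l.+1 - 1 != 0 by apply: lt0r_neq0; exact: em1_gt0.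
apply: (mulIf nz).
have K1 := @gbinL m.+1 l ltac:(lia).
have K2 := @gbinL m l lm.
rewrite (_ : (m.+1 - l.+1 = m - l)%N); last lia.
transitivity ((gbin m.+1 l.+1 * (e l.+1 - 1)) * (e (m - l) - 1)); first ring.
rewrite K1 (IH lm').
transitivity ((gbin m l.+1 * (e l.+1 - 1)) * (e m.+1 - 1)); last ring.
rewrite K2; ring.
Qed.

Lemma gbinmm m : gbin m m = 1.
Proof.
elim: m => [|m IH]; first exact: gbin0.
have nz : e m.+1 - 1 != 0 by apply: lt0r_neq0; exact: em1_gt0.
apply: (mulIf nz); rewrite mul1r gbinL // subSnn.
have := @gbinM m m (leqnn m); rewrite subSnn IH mul1r => <-; done.
Qed.


Lemma alt (f : nat -> rat) lo r :
  (forall h, 0 <= f h) -> (forall h, (lo <= h < lo + r)%N -> f h <= f h.+1) ->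
  let A := \sum_(lo <= h < (lo + r).+1) (-1) ^+ (lo + r - h) * f h in
  [/\ 0 <= A, A <= f (lo + r)%N &
     f (lo + r)%N - (if (0 < r)%N then f (lo + r).-1 else 0) <= A].
Proof.
move=> f0; elim: r => [|r IH] mono /=.
  rewrite addn0 big_nat1 subnn expr0 mul1r subr0; split => //; exact: f0.
have mono' : forall h, (lo <= h < lo + r)%N -> f h <= f h.+1.
  by move=> h /andP[a b]; apply: mono; apply/andP; split=> //; lia.
have [A0 A1 A2] := IH mono'.
rewrite big_nat_recr /=; last lia.
set A := \sum_(lo <= h < (lo + r).+1) _ in A0 A1 A2.
have -> : \sum_(lo <= h < lo + r.+1) (-1) ^+ (lo + r.+1 - h) * f h = - A.
  rewrite /A -sumrN addnS; apply: eq_big_nat => h /andP[_ hh].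
  rewrite (_ : ((lo + r).+1 - h = (lo + r - h).+1)%N); last lia.
  by rewrite exprS mulN1r mulNr.
rewrite subnn expr0 mul1r.
have fm : f (lo + r)%N <= f (lo + r.+1)%N.
  rewrite addnS; apply: mono; apply/andP; split; lia.
have -> : ((lo + r.+1).-1 = lo + r)%N by lia.
split.
- rewrite addrC subr_ge0; exact: le_trans A1 fm.
- rewrite addrC lerBlDr lerDl //.
- by rewrite addrC lerD2l lerN2.
Qed.


Definition Tm n d j i h : rat :=
  (q ^ (j * (j + h - i) + 'C(i - h, 2)))%:R * gbin i h * gbin (d - h) j
    * gbin (n - d - i + h) (n - d - j).

Lemma G_Tm n d j i : G n d j i =
  \sum_(maxn 0 (i - j) <= h < (minn i (d - j)).+1) (-1) ^+ (i - h) * Tm n d j i h.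
Proof. by apply: eq_bigr => h _; rewrite /Tm !mulrA. Qed.

Lemma Tm_gt0 n d j i h : 0 < Tm n d j i h.
Proof. by rewrite /Tm !mulr_gt0 ?gbin_gt0 // ltr0n expn_gt0. Qed.

Lemma R1x n d j i h : (i <= j + h)%N -> (h < i)%N -> (h + j < d)%N -> (i <= n - d)%N -> (j <= n - d)%N ->
  Tm n d j i h.+1 * (e (i - h.+1) * (e h.+1 - 1) * (e (d - h) - 1) * (e (j + h.+1 - i) - 1))
  = Tm n d j i h * (e j * (e (i - h) - 1) * (e (d - h - j) - 1) * (e (n - d - i + h.+1) - 1)).
Proof.
move=> h1 h2 h3 h4 h5.
have K0 : (q ^ (j * (j + h.+1 - i) + 'C(i - h.+1, 2)))%:R * e (i - h.+1)
        = (q ^ (j * (j + h - i) + 'C(i - h, 2)))%:R * e j.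
  rewrite -!natrM -!expnD; congr (_ ^ _)%:R.
  set c := (i - h.+1)%N; set u := (j + h - i)%N.
  rewrite (_ : (i - h = c.+1)%N); last by rewrite /c; lia.
  rewrite (_ : (j + h.+1 - i = u.+1)%N); last by rewrite /u; lia.
  rewrite binS bin1 mulnS; ring.
have K1 := @gbinL i h h2.
have K2 := @gbinM (d - h.+1) j ltac:(lia).
rewrite (_ : ((d - h.+1).+1 = d - h)%N) in K2; last lia.
have K3 := @gbinM (n - d - i + h) (n - d - j) ltac:(lia).
rewrite (_ : ((n - d - i + h).+1 = n - d - i + h.+1)%N) in K3; last lia.
rewrite (_ : ((n - d - i + h.+1) - (n - d - j) = j + h.+1 - i)%N) in K3; last lia.
rewrite /Tm.
transitivity (((q ^ (j * (j + h.+1 - i) + 'C(i - h.+1, 2)))%:R * e (i - h.+1))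
   * (gbin i h.+1 * (e h.+1 - 1)) * (gbin (d - h.+1) j * (e (d - h) - 1))
   * (gbin (n - d - i + h.+1) (n - d - j) * (e (j + h.+1 - i) - 1))); first ring.
rewrite K0 K1 -K2 K3; ring.
Qed.


Ltac pos := repeat match goal with
 | |- is_true (0 <= _ + _) => apply: addr_ge0
 | |- is_true (0 <= _ * _) => apply: mulr_ge0
 | |- is_true (0 <= _%:R) => apply: ler0n
 | _ => assumption end.

Lemma shift {X b : rat} : b <= X -> exists2 x, 0 <= x & X = x + b.
Proof. by move=> h; exists (X - b); [rewrite subr_ge0 | rewrite subrK]. Qed.

Lemma P1 (C S W H N : rat) : 1 <= C -> 2 <= S -> 2 <= W -> 1 <= H -> 2*S*W*H <= N ->
  C*(2*H-1)*(W*S*C-1)*(S-1) <= S*C*(2*C-1)*(W-1)*(N-1).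
Proof.
move=> hC hS hW hH hN.
apply: (le_trans (y := S*C*(2*C-1)*(W-1)*(2*S*W*H-1))).
  have [x x0 ->] := shift hC; have [y y0 ->] := shift hS.
  have [z z0 ->] := shift hW; have [t t0 ->] := shift hH.
  rewrite -subr_ge0; set X := (_ - _).
  have -> : X = 11%:R + 10%:R * (t) + 34%:R * (t * x) + 24%:R * (t * x * x) + 20%:R * (t * x * x * y) + 4%:R * (t * x * x * y * y) + 10%:R * (t * x * x * y * y * z) + 4%:R * (t * x * x * y * y * z * z) + 42%:R * (t * x * x * y * z) + 16%:R * (t * x * x * y * z * z) + 44%:R * (t * x * x * z) + 16%:R * (t * x * x * z * z) + 26%:R * (t * x * y) + 4%:R * (t * x * y * y) + 14%:R * (t * x * y * y * z) + 6%:R * (t * x * y * y * z * z) + 60%:R * (t * x * y * z) + 24%:R * (t * x * y * z * z) + 64%:R * (t * x * z) + 24%:R * (t * x * z * z) + 6%:R * (t * y) + 4%:R * (t * y * y * z) + 2%:R * (t * y * y * z * z) + 18%:R * (t * y * z) + 8%:R * (t * y * z * z) + 20%:R * (t * z) + 8%:R * (t * z * z) + 35%:R * (x) + 24%:R * (x * x) + 24%:R * (x * x * y) + 6%:R * (x * x * y * y) + 11%:R * (x * x * y * y * z) + 4%:R * (x * x * y * y * z * z) + 43%:R * (x * x * y * z) + 16%:R * (x * x * y * z * z) + 42%:R * (x * x * z) + 16%:R * (x * x * z * z) + 34%:R * (x * y) + 8%:R * (x * y * y) + 16%:R * (x * y * y * z) + 6%:R * (x * y * y * z * z) + 63%:R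 * (x * y * z) + 24%:R * (x * y * z * z) + 62%:R * (x * z) + 24%:R * (x * z * z) + 10%:R * (y) + 2%:R * (y * y) + 5%:R * (y * y * z) + 2%:R * (y * y * z * z) + 20%:R * (y * z) + 8%:R * (y * z * z) + 20%:R * (z) + 8%:R * (z * z) by rewrite /X; ring.
  pos.
apply: ler_wpM2l; last by rewrite lerD2r.
have [x x0 ->] := shift hC; have [y y0 ->] := shift hS.
have [z z0 ->] := shift hW.
have -> : (y + 2) * (x + 1) * (2 * (x + 1) - 1) * (z + 2 - 1) = (y+2)*(x+1)*(2*x+1)*(z+1) by ring.
pos. all: try by [].
Qed.

Lemma R1 n d j i h : (2*d+1 <= n)%N -> (i <= d)%N -> (i <= j + h)%N -> (h < i)%N ->
  (h + j < d)%N -> Tm n d j i h <= Tm n d j i h.+1.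
Proof.
move=> hn hi h1 h2 h3.
have := @R1x n d j i h h1 h2 h3 ltac:(lia) ltac:(lia).
set Dr := (e (i - h.+1) * _ * _ * _); set Nr := (e j * _ * _ * _).
move=> E.
have Dr0 : 0 < Dr.
  rewrite /Dr !mulr_gt0 ?e_gt0 // em1_gt0 //; lia.
have DN : Dr <= Nr.
  rewrite /Dr /Nr.
  set c := (i - h.+1)%N; set s := (j + h.+1 - i)%N; set w := (d - h - j)%N.
  have Ej : e j = e s * e c by rewrite -natrM -expnD; congr (_ ^ _)%:R; rewrite /s /c; lia.
  have Edh : e (d - h) = e w * e s * e c.
    by rewrite -!natrM -!expnD; congr (_ ^ _)%:R; rewrite /s /c /w; lia.
  have Eih : e (i - h) = 2 * e c by rewrite -eS; congr (_ ^ _)%:R; rewrite /c; lia.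
  rewrite Ej Edh Eih eS.
  have s1 : (0 < s)%N by rewrite /s; lia.
  have w1 : (0 < w)%N by rewrite /w; lia.
  apply: P1; rewrite ?e_ge1 ?e_ge2 //.
  rewrite -e1 -!natrM -!expnD; apply: e_le; rewrite /s /w; lia.
by rewrite -(ler_pM2r Dr0) E ler_pM2l ?Tm_gt0.
Qed.


Lemma Gbounds n d j i : (2*d+1 <= n)%N -> (i <= d)%N -> (j <= d)%N ->
  `|G n d j i| <= Tm n d j i (minn i (d - j)) /\
  Tm n d j i (minn i (d - j)) - (if (i - j < minn i (d - j))%N
      then Tm n d j i (minn i (d - j)).-1 else 0) <= `|G n d j i|.
Proof.
move=> hn hi hj.
rewrite G_Tm max0n.
set hi' := minn i (d - j); set lo := (i - j)%N.
have lohi : (lo <= hi')%N by rewrite /lo /hi'; lia.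
set r := (hi' - lo)%N.
have hir : hi' = (lo + r)%N by rewrite /r; lia.
have mono : forall h, (lo <= h < lo + r)%N -> Tm n d j i h <= Tm n d j i h.+1.
  move=> h /andP[a b]; apply: R1 => //; rewrite /lo /r /hi' in a b *; lia.
have [A0 A1 A2] := @alt (Tm n d j i) lo r (fun h => ltW (Tm_gt0 n d j i h)) mono.
set A := \sum_(lo <= h < (lo + r).+1) _ in A0 A1 A2.
have -> : \sum_(lo <= h < hi'.+1) (-1) ^+ (i - h) * Tm n d j i h = (-1) ^+ (i - hi') * A.
  rewrite /A -hir big_distrr /=; apply: eq_big_nat => h /andP[_ hh].
  rewrite mulrA -exprD; congr ((-1) ^+ _ * _); rewrite hir; rewrite /hi' /lo /r in hh *; lia.
rewrite normrM normr_sign mul1r ger0_norm // hir; split => //.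
have -> : (lo < lo + r)%N = (0 < r)%N by lia.
done.
Qed.



Lemma PC1 (I J A N : rat) : 1 <= I -> 2 <= J -> 2 <= A -> 2*I*J*A <= N ->
  [/\ 0 < A*J-1, 0 < J*(2*A-1)*(N-1), 0 <= (I-1)*(2*A*J-1)*(J-1) &
   (A-1)*(J*(2*A-1)*(N-1)) + (I-1)*(2*A*J-1)*(J-1)*(A*J-1) < (A*J-1)*(J*(2*A-1)*(N-1))].
Proof.
move=> hI hJ hA hN.
have [u u0 ->] := shift hN.
have [x x0 ->] := shift hI; have [y y0 ->] := shift hJ; have [z z0 ->] := shift hA.
split.
- match goal with |- is_true (_ < ?Xg) => have -> : Xg = 2%:R * (y) + 1%:R * (y * z) + 2%:R * (z) + 3%:R by ring end.
  apply: ltr_wpDl; [pos | by rewrite ltr0n].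
- match goal with |- is_true (_ < ?Xg) => have -> : Xg = 6%:R * (u) + 3%:R * (u * y) + 2%:R * (u * y * z) + 4%:R * (u * z) + 48%:R * (x) + 48%:R * (x * y) + 12%:R * (x * y * y) + 14%:R * (x * y * y * z) + 4%:R * (x * y * y * z * z) + 56%:R * (x * y * z) + 16%:R * (x * y * z * z) + 56%:R * (x * z) + 16%:R * (x * z * z) + 45%:R * (y) + 12%:R * (y * y) + 14%:R * (y * y * z) + 4%:R * (y * y * z * z) + 54%:R * (y * z) + 16%:R * (y * z * z) + 52%:R * (z) + 16%:R * (z * z) + 42%:R by ring end.
  apply: ltr_wpDl; [pos | by rewrite ltr0n].
- match goal with |- is_true (_ <= ?Xg) => have -> : Xg = 7%:R * (x) + 11%:R * (x * y) + 4%:R * (x * y * y) + 2%:R * (x * y * y * z) + 6%:R * (x * y * z) + 4%:R * (x * z) by ring end.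
  pos.
- rewrite -subr_gt0; set Xg := (_ - _).
  have -> : Xg = 12%:R * (u) + 18%:R * (u * y) + 6%:R * (u * y * y) + 7%:R * (u * y * y * z) + 2%:R * (u * y * y * z * z) + 21%:R * (u * y * z) + 6%:R * (u * y * z * z) + 14%:R * (u * z) + 4%:R * (u * z * z) + 75%:R * (x) + 145%:R * (x * y) + 86%:R * (x * y * y) + 16%:R * (x * y * y * y) + 32%:R * (x * y * y * y * z) + 20%:R * (x * y * y * y * z * z) + 4%:R * (x * y * y * y * z * z * z) + 163%:R * (x * y * y * z) + 100%:R * (x * y * y * z * z) + 20%:R * (x * y * y * z * z * z) + 265%:R * (x * y * z) + 160%:R * (x * y * z * z) + 32%:R * (x * y * z * z * z) + 134%:R * (x * z) + 80%:R * (x * z * z) + 16%:R * (x * z * z * z) + 174%:R * (y) + 114%:R * (y * y) + 24%:R * (y * y * y) + 40%:R * (y * y * y * z) + 22%:R * (y * y * y * z * z) + 4%:R * (y * y * y * z * z * z) + 193%:R * (y * y * z) + 108%:R * (y * y * z * z) + 20%:R * (y * y * z * z * z) + 299%:R * (y * z) + 170%:R * (y * z * z) + 32%:R * (y * z * z * z) + 146%:R * (z) + 84%:R * (z * z) + 16%:R * (z * z * z) + 84%:R by rewrite /Xg; ring.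
  apply: ltr_wpDl; [pos | by rewrite ltr0n].
Qed.

Lemma PC2 (M P S N : rat) : 1 <= M -> 1 <= P -> 2 <= S -> 2*P*S <= N ->
  [/\ 0 < M*S*(2*M-1)*(N-1), 0 <= M*(P-1)*(2*M*S-1)*(S-1) &
   M*(2*M*P-1)*(S-1) + M*(P-1)*(2*M*S-1)*(S-1) < M*S*(2*M-1)*(N-1)].
Proof.
move=> hM hP hS hN.
have [u u0 ->] := shift hN.
have [x x0 ->] := shift hM; have [y y0 ->] := shift hP; have [z z0 ->] := shift hS.
split.
- match goal with |- is_true (_ < ?Xg) => have -> : Xg = 2%:R * (u) + 6%:R * (u * x) + 4%:R * (u * x * x) + 2%:R * (u * x * x * z) + 3%:R * (u * x * z) + 1%:R * (u * z) + 18%:R * (x) + 12%:R * (x * x) + 16%:R * (x * x * y) + 16%:R * (x * x * y * z) + 4%:R * (x * x * y * z * z) + 14%:R * (x * x * z) + 4%:R * (x * x * z * z) + 24%:R * (x * y) + 24%:R * (x * y * z) + 6%:R * (x * y * z * z) + 21%:R * (x * z) + 6%:R * (x * z * z) + 8%:R * (y) + 8%:R * (y * z) + 2%:R * (y * z * z) + 7%:R * (z) + 2%:R * (z * z) + 6%:R by ring end.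
  apply: ltr_wpDl; [pos | by rewrite ltr0n].
- match goal with |- is_true (_ <= ?Xg) => have -> : Xg = 4%:R * (x * x * y) + 6%:R * (x * x * y * z) + 2%:R * (x * x * y * z * z) + 7%:R * (x * y) + 11%:R * (x * y * z) + 4%:R * (x * y * z * z) + 3%:R * (y) + 5%:R * (y * z) + 2%:R * (y * z * z) by ring end.
  pos.
- rewrite -subr_gt0; set Xg := (_ - _).
  have -> : Xg = 2%:R * (u) + 6%:R * (u * x) + 4%:R * (u * x * x) + 2%:R * (u * x * x * z) + 3%:R * (u * x * z) + 1%:R * (u * z) + 15%:R * (x) + 10%:R * (x * x) + 10%:R * (x * x * y) + 8%:R * (x * x * y * z) + 2%:R * (x * x * y * z * z) + 12%:R * (x * x * z) + 4%:R * (x * x * z * z) + 13%:R * (x * y) + 9%:R * (x * y * z) + 2%:R * (x * y * z * z) + 18%:R * (x * z) + 6%:R * (x * z * z) + 3%:R * (y) + 1%:R * (y * z) + 6%:R * (z) + 2%:R * (z * z) + 5%:R by rewrite /Xg; ring.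
  apply: ltr_wpDl; [pos | by rewrite ltr0n].
Qed.



Lemma comb (X Y Zb Dy Dz sy sz : rat) : 0 < X -> 0 < Dy -> 0 < Dz ->
  Y * Dy = X * sy -> Zb * Dz <= X * sz -> sy * Dz + sz * Dy < Dy * Dz -> Y + Zb < X.
Proof.
move=> X0 Dy0 Dz0 EY EZ H.
have DD : 0 < Dy * Dz by rewrite mulr_gt0.
rewrite -(ltr_pM2r DD).
apply: (le_lt_trans (y := X * (sy * Dz + sz * Dy))); last by rewrite ltr_pM2l.
have -> : (Y + Zb) * (Dy * Dz) = (Y * Dy) * Dz + (Zb * Dz) * Dy by ring.
rewrite EY.
have -> : X * (sy * Dz + sz * Dy) = X * sy * Dz + (X * sz) * Dy by ring.
by rewrite lerD2l ler_pM2r.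
Qed.

Lemma C1Y n d j i : (i + j < d)%N -> (i.+1 <= n - d)%N ->
  Tm n d j i.+1 i.+1 * (e (d - i - j) * e j - 1) = Tm n d j i i * (e (d - i - j) - 1).
Proof.
move=> h1 h2.
have EAJ : e (d - i - j) * e j = e (d - i) by rewrite -natrM -expnD; congr (_ ^ _)%:R; lia.
have K := @gbinM (d - i.+1) j ltac:(lia).
rewrite (_ : ((d - i.+1).+1 = d - i)%N) in K; last lia.
rewrite EAJ /Tm !subnn !gbinmm !addnK.
rewrite (_ : (n - d - i.+1 + i.+1 = n - d - i + i)%N); last lia.
transitivity ((q ^ (j * j + 'C(0, 2)))%:R * 1 * (gbin (d - i.+1) j * (e (d - i) - 1))
   * gbin (n - d - i + i) (n - d - j)); first ring.
rewrite -K; ring.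
Qed.

Lemma C1Z n d j i : (1 <= j)%N -> (i.+1 + j < d)%N -> (2*d+1 <= n)%N ->
  Tm n d j i.+1 i * (e j * (2 * e (d - i.+1 - j) - 1) * (e (n - d) - 1))
  = Tm n d j i.+1 i.+1 * ((e i.+1 - 1) * (2 * e (d - i.+1 - j) * e j - 1) * (e j - 1)).
Proof.
move=> hj h1 hn.
have H := @R1x n d j i.+1 i ltac:(lia) (ltnSn i) ltac:(lia) ltac:(lia) ltac:(lia).
rewrite subnn (_ : (j + i.+1 - i.+1 = j)%N) in H; last lia.
rewrite (_ : (i.+1 - i = 1)%N) in H; last lia.
rewrite (_ : (n - d - i.+1 + i.+1 = n - d)%N) in H; last lia.
have E1 : e (d - i) = 2 * e (d - i.+1 - j) * e j.
  by rewrite -eS -natrM -expnD; congr (_ ^ _)%:R; lia.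
have E2 : e (d - i - j) = 2 * e (d - i.+1 - j).
  by rewrite -eS; congr (_ ^ _)%:R; lia.
rewrite E1 E2 in H.
symmetry; refine (eq_trans _ (eq_trans H _)); rewrite /= ?e0 ?e1; ring.
Qed.

Lemma C2Y n d j i : (d <= i + j)%N -> (i < d)%N -> (j <= d)%N -> (2*d+1 <= n)%N ->
  Tm n d j i.+1 (d - j) * (e (i + j - d) * e (d - i) * (2 * e (i + j - d) - 1) * (e (n - i - j) - 1))
  = Tm n d j i (d - j) * (e (i + j - d) * (2 * e (i + j - d) * e (d - j) - 1) * (e (d - i) - 1)).
Proof.
move=> h1 h2 h3 hn.
set m := (i + j - d)%N.
have K0 : (q ^ (j * (j + (d - j) - i.+1) + 'C(i.+1 - (d - j), 2)))%:R * e j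
        = (q ^ (j * (j + (d - j) - i) + 'C(i - (d - j), 2)))%:R * e m.
  rewrite -!natrM -!expnD; congr (_ ^ _)%:R.
  set u := (d - i.+1)%N.
  rewrite (_ : (j + (d - j) - i.+1 = u)%N); last by rewrite /u; lia.
  rewrite (_ : (j + (d - j) - i = u.+1)%N); last by rewrite /u; lia.
  rewrite (_ : (i.+1 - (d - j) = m.+1)%N); last by rewrite /m; lia.
  rewrite (_ : (i - (d - j) = m)%N); last by rewrite /m; lia.
  rewrite binS bin1 mulnS; ring.
have K1 := @gbinM i (d - j) ltac:(lia).
rewrite (_ : (i.+1 - (d - j) = m.+1)%N) in K1; last by rewrite /m; lia.
have K3 := @gbinM (n - d - i.+1 + (d - j)) (n - d - j) ltac:(lia).
rewrite (_ : ((n - d - i.+1 + (d - j)).+1 = n - d - i + (d - j))%N) in K3; last lia.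
rewrite (_ : ((n - d - i + (d - j)) - (n - d - j) = d - i)%N) in K3; last lia.
have H : Tm n d j i.+1 (d - j) * (e j * (e m.+1 - 1) * (e (n - d - i + (d - j)) - 1))
       = Tm n d j i (d - j) * (e m * (e i.+1 - 1) * (e (d - i) - 1)).
  rewrite /Tm.
  transitivity (((q ^ (j * (j + (d - j) - i.+1) + 'C(i.+1 - (d - j), 2)))%:R * e j)
     * (gbin i.+1 (d - j) * (e m.+1 - 1)) * gbin (d - (d - j)) j
     * (gbin (n - d - i.+1 + (d - j)) (n - d - j) * (e (n - d - i + (d - j)) - 1))); first ring.
  rewrite K0 K1 -K3; ring.
have E1 : e j = e m * e (d - i) by rewrite -natrM -expnD; congr (_ ^ _)%:R; rewrite /m; lia.
have E2 : e i.+1 = 2 * e m * e (d - j).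
  by rewrite -eS -natrM -expnD; congr (_ ^ _)%:R; rewrite /m; lia.
rewrite E1 E2 eS (_ : (n - d - i + (d - j) = n - i - j)%N) in H; last lia.
refine (eq_trans _ (eq_trans H _)); ring.
Qed.

Lemma C2Z n d j i p : (d <= i + j)%N -> (i < d)%N -> (d - j = p.+1)%N -> (2*d+1 <= n)%N ->
  Tm n d j i p * (e (i + j - d) * e (d - i) * (2 * e (i + j - d) - 1) * (e (n - i - j) - 1))
  = Tm n d j i (d - j) * (e (i + j - d) * (e (d - j) - 1) * (2 * e (i + j - d) * e (d - i) - 1) * (e (d - i) - 1)).
Proof.
move=> h1 h2 h3 hn.
have H := @R1x n d j i p ltac:(lia) ltac:(lia) ltac:(lia) ltac:(lia) ltac:(lia).
rewrite -h3 in H.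
set m := (i + j - d)%N.
have E1 : e j = e m * e (d - i) by rewrite -natrM -expnD; congr (_ ^ _)%:R; rewrite /m; lia.
have E2 : e (i - p) = 2 * e m by rewrite -eS; congr (_ ^ _)%:R; rewrite /m; lia.
have E3 : e (d - p) = 2 * e m * e (d - i).
  by rewrite -eS -natrM -expnD; congr (_ ^ _)%:R; rewrite /m; lia.
rewrite (_ : (i - (d - j) = m)%N) in H; last by rewrite /m; lia.
rewrite (_ : (j + (d - j) - i = d - i)%N) in H; last lia.
rewrite (_ : (d - p - j = 1)%N) in H; last lia.
rewrite (_ : (n - d - i + (d - j) = n - i - j)%N) in H; last lia.
rewrite E1 E2 E3 in H.
symmetry; refine (eq_trans _ (eq_trans H _)); rewrite ?e1; ring.
Qed.


Theorem theorem3p7 (n d : nat) :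
  (1 <= d)%N -> (2 * d + 1 <= n)%N ->
  forall i j : nat, (i <= d - 1)%N -> (1 <= j <= d)%N ->
    `|G n d j i.+1| < `|G n d j i|.
Proof.
move=> hd hn i j hi /andP[hj1 hjd].
have [U _] := @Gbounds n d j i.+1 hn ltac:(lia) hjd.
have [_ L] := @Gbounds n d j i hn ltac:(lia) hjd.
have X0 := Tm_gt0 n d j i.
case: (ltnP (i + j) d) => hc.
- rewrite (_ : minn i.+1 (d - j) = i.+1) in U; last lia.
  rewrite (_ : minn i (d - j) = i) in L; last lia.
  set X := Tm n d j i i in L; set Y := Tm n d j i.+1 i.+1 in U.
  set Zb := (if _ then _ else _) in L.
  suff : Y + Zb < X by move=> H; lra.
  have [p1 p2 p3 p4] := @PC1 (e i) (e j) (e (d - i - j)) (e (n - d)) (e_ge1 _)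
     (@e_ge2 j hj1) (@e_ge2 (d - i - j) ltac:(lia)) ltac:(rewrite -e1 -!natrM -!expnD; apply: e_le; lia).
  apply: (@comb _ _ _ _ _ _ _ (X0 i) p1 p2 (@C1Y n d j i hc ltac:(lia)) _ p4).
  rewrite /Zb; case: ifP => hb; last by rewrite mul0r mulr_ge0 // ltW.
  have i0 : (0 < i)%N by lia.
  have := @C1Z n d j i.-1 hj1 ltac:(lia) hn; rewrite prednK // => ->.
  by [].
- rewrite (_ : minn i.+1 (d - j) = d - j)%N in U; last lia.
  rewrite (_ : minn i (d - j) = d - j)%N in L; last lia.
  set X := Tm n d j i (d - j) in L; set Y := Tm n d j i.+1 (d - j) in U.
  set Zb := (if _ then _ else _) in L.
  suff : Y + Zb < X by move=> H; lra.
  have [p1 p2 p3] := @PC2 (e (i + j - d)) (e (d - j)) (e (d - i)) (e (n - i - j)) (e_ge1 _)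
     (e_ge1 _) (@e_ge2 (d - i) ltac:(lia)) ltac:(rewrite -e1 -!natrM -!expnD; apply: e_le; lia).
  apply: (@comb _ _ _ _ _ _ (e (i + j - d) * (e (d - j) - 1) * (2 * e (i + j - d) * e (d - i) - 1) * (e (d - i) - 1)) (X0 _) p1 p1 (@C2Y n d j i hc ltac:(lia) hjd hn) _ _).
  + rewrite /Zb; case: ifP => hb; last by rewrite mul0r mulr_ge0 // ltW.
    have := @C2Z n d j i (d - j).-1 hc ltac:(lia) ltac:(lia) hn => ->.
    by [].
  + by rewrite -mulrDl ltr_pM2r.
Qed.
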